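(* Let $n,m\in\mathbb{N}$, $f:\mathbb{F}_2^n\to\mathbb{F}_2$, $\mathbf{y}\in\mathbb{F}_2^n$, and $h(\mathbf{x})=\mathbf{x}\cdot\mathbf{y}$. Then: (i) when $A^{(m)3,3}_n(h,f,f)$ is executed, the probability of measuring $\ket{0^n}$ is $2^{-2n}|C^{(m)}_f(\mathbf{y})|^2$; (ii) when $A^{(m)2,3}_n(h,f,f)$ is executed, the probability of measuring the driving qubit in $\ket{0}$ is $\frac12\left[1+\Re\left(2^{-n}\zeta_m^{-wt(\mathbf{y})}C^{(m)}_f(\mathbf{y})\right)\right]$.
   Context: $\zeta_m=e^{2\pi i/m}$, $\overline{\zeta_m}$ its conjugate; $wt$ is Hamming weight; $\mathbf{x}\cdot\mathbf{y}=\bigoplus_i x_iy_i$; $\mathbf{x}\odot\mathbf{y}=\sum_ix_iy_i$ in the integers. $m$-autocorrelation: $C^{(m)}_{f}(\mathbf{y})=\sum_{\mathbf{x}}(-1)^{f(\mathbf{x})\oplus f(\mathbf{x}\oplus\mathbf{y})}(\zeta_m^2)^{\mathbf{x}\odot\mathbf{y}}$. Gates: $\mathrm{H}$ Hadamard; $\Omega_m=\frac{1}{\sqrt2}\begin{pmatrix}1&\zeta_m\\1&-\zeta_m\end{pmatrix}$; $\overline{\Omega}_m=\frac{1}{\sqrt2}\begin{pmatrix}1&\overline{\zeta_m}\\1&-\overline{\zeta_m}\end{pmatrix}$; $\mathrm{S}_m=\mathrm{diag}(1,\zeta_m)$; $U_f$ is the phase oracle $\ket{\mathbf{x}}\mapsto(-1)^{f(\mathbf{x})}\ket{\mathbf{x}}$.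 Algorithm $A^{(m)3,3}_n(f_1,f_2,f_3)$: from $\ket{0^n}$ apply in order $\mathrm{H}^{\otimes n}$, $U_{f_2}$, $\Omega_m^{\otimes n}$, $U_{f_1}$, $\mathrm{H}^{\otimes n}$, $U_{f_3}$, $\overline{\Omega}_m^{\otimes n}$, then measure all qubits. Algorithm $A^{(m)2,3}_n(f_1,f_2,f_3)$: driving qubit in $\ket{+}$, $n$-qubit register in $\ket{0^n}$; apply $\mathrm{H}^{\otimes n}$ to the register; controlled on driving qubit $\ket{0}$ apply $U_{f_2}$, $\Omega_m^{\otimes n}$, $U_{f_1}$, $\mathrm{H}^{\otimes n}$ in order; controlled on driving qubit $\ket{1}$ apply $\mathrm{S}_m^{\otimes n}$, $U_{f_3}$ in order; apply $\mathrm{H}$ to the driving qubit and measure it. *)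

(* Defs.v *)
From HB Require Import structures.
From mathcomp Require Import all_boot all_order all_algebra.
From mathcomp Require Import complex.
From mathcomp Require Import reals trigo.
Set Implicit Arguments. Unset Strict Implicit. Unset Printing Implicit Defensive.
Import Order.TTheory GRing.Theory Num.Theory.
Local Open Scope ring_scope.
Local Open Scope complex_scope.

(* Computational basis of n qubits: bit strings F_2^n. *)
Definition bits (n : nat) := {ffun 'I_n -> bool}.

Section Quantum.
Variable R : realType.
Local Notation C := R[i].

Definition zeta (m : nat) : C :=
  (cos (2 * pi / m%:R)) +i* (sin (2 * pi / m%:R)).

Definition sqrt2 : C := (Num.sqrt (2 : R))%:C.

(* A single-qubit gate, given by its matrix entries G out in. *)
Definition gate := bool -> bool -> C.

Definition Hgate : gate := fun b c => (-1) ^+ (b && c) / sqrt2.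
Definition Omega (m : nat) : gate :=
  fun b c => (if c then (if b then - zeta m else zeta m) else 1) / sqrt2.
Definition Omegabar (m : nat) : gate :=
  fun b c => (if c then (if b then - (zeta m)^* else (zeta m)^*) else 1) / sqrt2.
Definition Sgate (m : nat) : gate :=
  fun b c => if b == c then (if b then zeta m else 1) else 0.

Definition state (n : nat) := bits n -> C.

Definition tens (n : nat) (G : gate) (psi : state n) : state n :=
  fun x => \sum_(z : bits n) (\prod_(i < n) G (x i) (z i)) * psi z.

Definition oracle (n : nat) (f : bits n -> bool) (psi : state n) : state n :=
  fun x => (-1) ^+ (f x) * psi x.

Definition ket0 (n : nat) : state n := fun x => (x == [ffun => false])%:R.

Arguments ket0 : clear implicits.

Definition A33 (m n : nat) (f1 f2 f3 : bits n -> bool) : state n :=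
  tens (Omegabar m) (oracle f3 (tens Hgate (oracle f1
    (tens (Omega m) (oracle f2 (tens Hgate (ket0 n))))))).

Definition prob_outcome (n : nat) (psi : state n) (x : bits n) : C := `|psi x| ^+ 2.

(* (n+1)-qubit states: driving qubit (bool) times n-qubit register *)
Definition dstate (n : nat) := bool -> state n.

Definition init_drv (n : nat) : dstate n := fun d => fun x => (ket0 n x) / sqrt2.
Arguments init_drv : clear implicits.
Definition on_reg (n : nat) (U : state n -> state n) (Psi : dstate n) : dstate n :=
  fun d => U (Psi d).
Definition ctrl (n : nat) (b : bool) (U : state n -> state n) (Psi : dstate n) : dstate n :=
  fun d => if d == b then U (Psi d) else Psi d.
Definition on_drv (n : nat) (G : gate) (Psi : dstate n) : dstate n :=
  fun d x => \sum_(c : bool) G d c * Psi c x.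

Definition A23 (m n : nat) (f1 f2 f3 : bits n -> bool) : dstate n :=
  let Psi1 := on_reg (tens Hgate) (init_drv n) in
  let Psi2 := ctrl false (tens Hgate) (ctrl false (oracle f1)
                (ctrl false (tens (Omega m)) (ctrl false (oracle f2) Psi1))) in
  let Psi3 := ctrl true (oracle f3) (ctrl true (tens (Sgate m)) Psi2) in
  on_drv Hgate Psi3.

Definition prob_drv (n : nat) (Psi : dstate n) (b : bool) : C :=
  \sum_(x : bits n) `|Psi b x| ^+ 2.

Definition dotF2 (n : nat) (x y : bits n) : bool := \big[addb/false]_(i < n) (x i && y i).
Definition dotZ (n : nat) (x y : bits n) : nat := \sum_(i < n) (x i && y i).
Definition xorb_bits (n : nat) (x y : bits n) : bits n := [ffun i => x i (+) y i].
Definition wt (n : nat) (y : bits n) : nat := \sum_(i < n) y i.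

Definition autocorr (m n : nat) (f : bits n -> bool) (y : bits n) : C :=
  \sum_(x : bits n) (-1) ^+ (f x (+) f (xorb_bits x y)) * (zeta m ^+ 2) ^+ (dotZ x y).

End Quantum.

Arguments A33 {R} m {n}.
Arguments A23 {R} m {n}.
Arguments autocorr {R} m {n}.

(* Main.v *)
Require Import Defs.
From HB Require Import structures.
From mathcomp Require Import all_boot all_order all_algebra.
From mathcomp Require Import complex.
From mathcomp Require Import reals trigo boolp ring.
Import Order.TTheory GRing.Theory Num.Theory.
Local Open Scope ring_scope.
Local Open Scope complex_scope.

Section Helpers.
Variable R : realType.
Local Notation C := R[i].
Variable m : nat.
Local Notation z := (zeta R m).
Local Notation s := ((sqrt2 R)^-1).

Lemma zetaJ : z * z^* = 1.
Proof. rewrite /zeta; simpc; rewrite -!expr2 cos2Dsin2 (mulrC (sin _)) addNr //. Qed.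
Lemma zetaJ' : z^* * z = 1.
Proof. by rewrite mulrC zetaJ. Qed.
Lemma zeta_neq0 : z != 0.
Proof. apply/eqP => h; have := zetaJ; rewrite h mul0r => /eqP; rewrite eq_sym oner_eq0. done. Qed.
Lemma zetaV : z^-1 = z^*.
Proof. by rewrite -[z^-1]mulr1 -zetaJ mulrA mulVf ?zeta_neq0 // mul1r. Qed.
Lemma norm_zeta : `|z| = 1.
Proof. apply/eqP; rewrite -sqrp_eq1 // sqr_normc zetaJ //. Qed.

Lemma sqrt2_sq : sqrt2 R * sqrt2 R = 2.
Proof. rewrite /sqrt2 -rmorphM /= -expr2 sqr_sqrtr // ?ler0n //. by rewrite rmorph_nat. Qed.
Lemma sqrt2_neq0 : sqrt2 R != 0.
Proof. apply/eqP => h; have := sqrt2_sq; rewrite h mul0r => /eqP; rewrite eq_sym pnatr_eq0. done. Qed.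
Lemma ss : s * s = 2^-1.
Proof. by rewrite -invfM sqrt2_sq. Qed.
Lemma sJ : s^* = s.
Proof. by rewrite conjc_inv /sqrt2 conjc_real. Qed.

Lemma conjcM (a b : C) : (a * b)^* = a^* * b^*. Proof. exact: rmorphM. Qed.
Lemma conjcD (a b : C) : (a + b)^* = a^* + b^*. Proof. exact: rmorphD. Qed.
Lemma conjcX (a : C) k : (a ^+ k)^* = a^* ^+ k. Proof. exact: rmorphXn. Qed.
Lemma conjc_sign k : ((-1) ^+ k : C)^* = (-1) ^+ k. Proof. exact: rmorph_sign. Qed.
Lemma conjc_prod (I : finType) (F : I -> C) : (\prod_i F i)^* = \prod_i (F i)^*.
Proof. exact: rmorph_prod. Qed.
Lemma conjc_sum (I : finType) (F : I -> C) : (\sum_i F i)^* = \sum_i (F i)^*.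
Proof. exact: rmorph_sum. Qed.

Lemma Hfalse b : Hgate R b false = s.
Proof. by rewrite /Hgate andbF mul1r. Qed.

Lemma sign_dot n (u y : bits n) : (-1) ^+ (dotF2 u y) = \prod_i ((-1) ^+ (u i && y i)) :> C.
Proof.
rewrite /dotF2; apply: (big_rec2 (fun (a : bool) (b : C) => (-1) ^+ a = b)) => [|i a b _ <-]; first by rewrite expr0.
by rewrite signr_addb.
Qed.

Lemma expr_sum n (x : C) (F : 'I_n -> nat) : x ^+ (\sum_i F i)%N = \prod_i x ^+ F i.
Proof.
apply: (big_rec2 (fun (a : nat) (b : C) => x ^+ a = b)) => [|i a b _ <-]; first by rewrite expr0.
by rewrite exprD.
Qed.


Variable n : nat.
Implicit Types (G : gate R) (psi : state R n).

Lemma tens_const G c (x : bits n) :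
  tens G (fun _ => c) x = c * \prod_(i < n) \sum_(b : bool) G (x i) b.
Proof.
rewrite bigA_distr_bigA mulr_sumr /tens; apply: eq_bigr => w _.
by rewrite mulrC.
Qed.

Lemma tens_pt G psi (x : bits n) :
  (forall w, w != [ffun => false] -> psi w = 0) ->
  tens G psi x = psi [ffun => false] * \prod_(i < n) G (x i) false.
Proof.
move=> h; rewrite /tens (bigD1 [ffun => false]) //= [X in _ + X]big1 => [|w hw].
  rewrite addr0 mulrC; congr (_ * _); apply: eq_bigr => i _; by rewrite ffunE.
by rewrite h // mulr0.
Qed.

Lemma prod_ind (w w' : bits n) (g : 'I_n -> C) :
  \prod_(i < n) ((w' i == w i)%:R * g i) = (w' == w)%:R * \prod_(i < n) g i.
Proof.
have [->|ne] := eqVneq w' w.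
  by rewrite mul1r; apply: eq_bigr => i _; rewrite eqxx mul1r.
have [i hi] : exists i, w' i != w i.
  apply/existsP; apply: contraNT ne => /existsPn h; apply/eqP/ffunP => i.
  by have := h i; rewrite negbK => /eqP.
by rewrite (bigD1 i) //= (negbTE hi) !mul0r.
Qed.

Lemma Kcoord a c d :
  \sum_(b : bool) (Hgate R a b * (-1) ^+ (b && c)) * Omega R m b d
  = (d == a (+) c)%:R * z ^+ d.
Proof.
have h2 : s * s + s * s = 1.
  by rewrite ss; field.
rewrite /index_enum /= !unlock /= /Hgate /Omega.
set t := (sqrt2 R)^-1 in h2 *.
by case: a; case: c; case: d => /=;
  first [ring | (transitivity ((t*t+t*t) * z); [ring | by rewrite h2 mul1r])
              | (transitivity ((t*t+t*t) * 1); [ring | by rewrite h2 mul1r])].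
Qed.


Lemma sum_prod (F : 'I_n -> bool -> C) :
  \sum_(u : bits n) \prod_(i < n) F i (u i) = \prod_(i < n) \sum_(b : bool) F i b.
Proof. by rewrite bigA_distr_bigA. Qed.

Lemma sum_pick (W : bits n) (F : bits n -> C) :
  \sum_(w : bits n) F w * (w == W)%:R = F W.
Proof.
rewrite (bigD1 W) //= eqxx mulr1 [X in _ + X]big1 ?addr0 // => w hw.
by rewrite (negbTE hw) mulr0.
Qed.

Lemma key (f : bits n -> bool) (y : bits n) c (v : bits n) :
  tens (Hgate R) (oracle (fun x => dotF2 x y) (tens (Omega R m) (oracle f (fun _ => c)))) v
  = c * ((-1) ^+ f (xorb_bits v y) * \prod_(i < n) z ^+ (xorb_bits v y i)).
Proof.
rewrite /tens /oracle.
under eq_bigr => u _ do rewrite sign_dot mulr_sumr mulr_sumr.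
rewrite exchange_big /=.
under eq_bigr => w _ do under eq_bigr => u _ do rewrite mulrA mulrA -!big_split /= mulrC.
under eq_bigr => w _ do rewrite -mulr_sumr (sum_prod (fun i b => Hgate R (v i) b * (-1) ^+ (b && y i) * Omega R m b (w i))).
have E i : v i (+) y i = xorb_bits v y i by rewrite ffunE.
under eq_bigr => w _ do under eq_bigr => i _ do rewrite Kcoord E.
under eq_bigr => w _ do rewrite prod_ind mulrCA mulrC.
rewrite sum_pick; ring.
Qed.


Lemma Ssum (f : bits n -> bool) (y : bits n) :
  \sum_(v : bits n) (((-1) ^+ f (xorb_bits v y) * \prod_(i < n) z ^+ (xorb_bits v y i))
     * ((-1) ^+ f v * \prod_(i < n) z^* ^+ (v i)))
  = z ^+ (wt y) * (autocorr m f y)^*.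
Proof.
rewrite /autocorr rmorph_sum mulr_sumr; apply: eq_bigr => v _.
rewrite rmorphM rmorph_sign !rmorphXn /dotZ /wt !expr_sum signr_addb.
have P : \prod_(i < n) z ^+ (xorb_bits v y i) * \prod_(i < n) z^* ^+ (v i)
   = \prod_(i < n) z ^+ (y i) * \prod_(i < n) (z^* ^+ 2) ^+ (v i && y i).
  rewrite -!big_split; apply: eq_bigr => i _; rewrite ffunE.
  case: (v i); case: (y i) => /=; rewrite ?expr0 ?expr1 ?expr2 ?mul1r ?mulr1 ?zetaJ //.
  by rewrite mulrA zetaJ mul1r.
transitivity ((-1) ^+ f v * (-1) ^+ f (xorb_bits v y) *
  (\prod_(i < n) z ^+ (xorb_bits v y i) * \prod_(i < n) z^* ^+ (v i))); first ring.
rewrite P; ring.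
Qed.

Lemma main (f : bits n -> bool) (y : bits n) :
  let h := fun x : bits n => dotF2 x y in
  prob_outcome (A33 m h f f) [ffun => false] =
    (2 ^- (2 * n) : R[i]) * `|autocorr m f y| ^+ 2
  /\
  prob_drv (A23 m h f f) false =
    2^-1 * (1 + 'Re ((2 ^- n : R[i]) * (zeta R m) ^- (wt y) * autocorr m f y)).
Proof.
move=> h.
set s := (sqrt2 R)^-1.
have Pc : s ^+ n = \prod_(i < n) s by rewrite prodr_const card_ord.
split.
  have E1 : tens (Hgate R) (@ket0 R n) = (fun _ : bits n => s ^+ n) :> state R n.
    apply: funext => x; rewrite tens_pt => [|w hw]; last by rewrite /ket0 (negbTE hw).
    by rewrite /ket0 eqxx mul1r; under eq_bigr => i _ do rewrite Hfalse; rewrite Pc.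
  have E2 : tens (Hgate R) (oracle h (tens (Omega R m) (oracle f (fun _ => s ^+ n))))
     = fun v => s ^+ n * ((-1) ^+ f (xorb_bits v y) * \prod_(i < n) z ^+ (xorb_bits v y i)).
    by apply: funext => v; rewrite key.
  rewrite /prob_outcome /A33 E1 E2 /tens /oracle.
  have E3 : \sum_(v : bits n) \prod_(i < n) Omegabar R m ([ffun=> false] i) (v i) *
       ((-1) ^+ f v * (s ^+ n * ((-1) ^+ f (xorb_bits v y) *
          \prod_(i < n) z ^+ xorb_bits v y i)))
     = s ^+ n * s ^+ n * (z ^+ wt y * (autocorr m f y)^*).
    rewrite -Ssum mulr_sumr; apply: eq_bigr => v _.
    have O : \prod_(i < n) Omegabar R m ([ffun=> false] i) (v i)
        = s ^+ n * \prod_(i < n) z^* ^+ (v i).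
      rewrite Pc -big_split; apply: eq_bigr => i _; rewrite ffunE /Omegabar.
      by case: (v i) => /=; rewrite ?expr0 ?expr1 mulrC.
    rewrite O; ring.
  rewrite E3 !normrM !normrX norm_zeta expr1n mul1r norm_conjC -exprMn -normrM ss.
  by rewrite normfV normr_nat exprMn -exprM exprVn mulnC.
have P1 : on_reg (tens (Hgate R)) (@init_drv R n) = fun _ _ => s * s ^+ n.
  apply: funext => d; apply: funext => x; rewrite /on_reg tens_pt => [|w hw].
    by rewrite /init_drv /ket0 eqxx mul1r; under eq_bigr => i _ do rewrite Hfalse; rewrite Pc.
  by rewrite /init_drv /ket0 (negbTE hw) mul0r.
rewrite /prob_drv /A23 P1 /on_drv.
under eq_bigr => x _ do rewrite /index_enum !unlock /= /ctrl /= key.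
have HL : forall b, Hgate R false b = s by move=> b; rewrite /Hgate mul1r.
have Sg : forall a, \sum_(b : bool) Sgate R m a b = z ^+ a.
  by case; rewrite /index_enum !unlock /= /Sgate /= ?expr1 ?expr0 ?addr0 ?add0r.
have N : forall (e : bool) (g : 'I_n -> bool),
    ((-1) ^+ e * \prod_(i < n) z ^+ (g i)) * ((-1) ^+ e * \prod_(i < n) z ^+ (g i))^*%C = 1.
  move=> e g; rewrite rmorphM rmorph_sign rmorph_prod.
  under [X in _ * (_ * X)]eq_bigr => i _ do rewrite rmorphXn.
  rewrite mulrACA -signr_addb addbb expr0 mul1r -big_split big1 // => i _ /=.
  by rewrite -exprMn zetaJ expr1n.
set k := s * (s * s ^+ n).
have kJ : k^*%C = k.
  have sJ' : s^*%C = s by exact: sJ.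
  by rewrite /k !rmorphM rmorphXn; congr (_ * (_ * _ ^+ _)); exact: sJ'.
set p1 := fun x : bits n => (-1) ^+ f x * \prod_(i < n) z ^+ (x i).
set p0 := fun x : bits n => (-1) ^+ f (xorb_bits x y) * \prod_(i < n) z ^+ (xorb_bits x y i).
set q := fun x => p0 x * (p1 x)^*%C.
have Ex : forall x : bits n, 
  `|Hgate R false true * oracle f (tens (Sgate R m) (fun=> s * s ^+ n)) x +
       (Hgate R false false * (s * s ^+ n * ((-1) ^+ f (xorb_bits x y) *
          \prod_(i < n) zeta R m ^+ xorb_bits x y i)) + 0)| ^+ 2
   = k * k * (2 + (q x + (q x)^*%C)).
  move=> x; rewrite !HL addr0 /oracle tens_const.
  under eq_bigr => i _ do rewrite Sg.
  transitivity (`|k * (p1 x + p0 x)| ^+ 2); first by congr (`|_| ^+ 2); rewrite /k /p1 /p0; ring.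
  transitivity (k * (p1 x + p0 x) * (k * (p1 x + p0 x))^*%C); first exact: sqr_normc.
  have c1 : (k * (p1 x + p0 x))^*%C = k * ((p1 x)^*%C + (p0 x)^*%C).
    by rewrite rmorphM rmorphD; congr (_ * (_ + _)); exact: kJ.
  have c2 : (p0 x * (p1 x)^*%C)^*%C = (p0 x)^*%C * p1 x.
    by rewrite rmorphM; congr (_ * _); exact: conjcK.
  have N1 : p1 x * (p1 x)^*%C = 1 := N (f x) (fun i => x i).
  have N0 : p0 x * (p0 x)^*%C = 1 := N (f (xorb_bits x y)) (fun i => xorb_bits x y i).
  rewrite c1 /q c2.
  transitivity (k * k * (p1 x * (p1 x)^*%C + p0 x * (p0 x)^*%C + (p0 x * (p1 x)^*%C + (p0 x)^*%C * p1 x))); first ring.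
  rewrite N1 N0; ring.
under eq_bigr => x _ do rewrite Ex.
set C0 := autocorr m f y.
have S1 : \sum_(x : bits n) q x = z ^+ (wt y) * C0^*%C.
  rewrite -Ssum; apply: eq_bigr => x _; rewrite /q /p1 /p0; congr (_ * _).
  rewrite rmorphM rmorph_sign rmorph_prod; congr (_ * _); apply: eq_bigr => i _.
  exact: rmorphXn.
have S2 : \sum_(x : bits n) (q x)^*%C = z^*%C ^+ (wt y) * C0.
  transitivity ((\sum_(x : bits n) q x)^*%C); first by rewrite rmorph_sum.
  rewrite S1 rmorphM; congr (_ * _); [exact: rmorphXn | exact: conjcK].
have E : \sum_(x : bits n) k * k * (2 + (q x + (q x)^*%C))
   = k * k * (2 * 2 ^+ n + (z ^+ (wt y) * C0^*%C + z^*%C ^+ (wt y) * C0)).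
  rewrite -mulr_sumr !big_split /= S1 S2 sumr_const card_ffun card_bool card_ord.
  by rewrite natrX; ring.
rewrite E.
have zw : z ^- wt y = z^*%C ^+ wt y by rewrite -exprVn zetaV.
have R1 : 'Re (2 ^- n / z ^+ wt y * C0)
    = (2 ^- n * (z^*%C ^+ wt y * C0 + z ^+ wt y * C0^*%C)) / 2.
  rewrite ReE zw.
  have cj : Num.conj (2 ^- n * z^*%C ^+ wt y * C0) = 2 ^- n * z ^+ wt y * C0^*%C.
    rewrite !rmorphM; congr (_ * _ * _).
      by rewrite fmorphV rmorphXn rmorph_nat.
    by rewrite rmorphXn; congr (_ ^+ _); exact: conjcK.
  rewrite cj; ring.
rewrite R1.
have kk : k * k = 2^-1 * 2^-1 * 2 ^- n.
  rewrite /k; transitivity ((s * s) * (s * s) * (s ^+ n * s ^+ n)); first ring.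
  by rewrite ss -exprMn ss exprVn.
rewrite kk.
field.
by rewrite expf_neq0 // pnatr_eq0.
Qed.

End Helpers.

Theorem corollary2 (R : realType) (n m : nat) (f : bits n -> bool) (y : bits n) :
  let h := fun x : bits n => dotF2 x y in
  prob_outcome (A33 m h f f) [ffun => false] =
    (2 ^- (2 * n) : R[i]) * `|autocorr m f y| ^+ 2
  /\
  prob_drv (A23 m h f f) false =
    2^-1 * (1 + 'Re ((2 ^- n : R[i]) * (zeta R m) ^- (wt y) * autocorr m f y)).
Proof. exact: main. Qed.
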